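(* Let $\gamma_1,\dots,\gamma_B$ be i.i.d. with density $f(\gamma)=\frac{m^m\gamma^{m-1}}{\Gamma(m)}e^{-m\gamma}$, $\gamma\ge0$ ($m>0$), let $\beta>0$ and $0<R\le I_{\mathcal X}(\beta)$. With $I^\beta_{\mathcal X}(\rho)=I_{\mathcal X}(\beta)\mathbf 1\{\rho\ge\beta\}$, there is a constant $\mathcal K_\beta>0$ such that, as $P\to\infty$, \[ \Pr\Big(\frac1B\sum_{b=1}^B I^\beta_{\mathcal X}(P\gamma_b)<R\Big)\doteq \mathcal K_\beta P^{-m\,d_\beta(R)},\qquad d_\beta(R)=1+\Big\lfloor B\Big(1-\frac{R}{I_{\mathcal X}(\beta)}\Big)\Big\rfloor. \]
   Context: $I_{\mathcal X}(\rho)$ is the mutual information (bits) of the AWGN channel with SNR $\rho$ and uniform input on a discrete constellation $\mathcal X$; $I_{\mathcal X}(\beta)>0$. Exponential equality: $f(P)\doteq KP^{-d}$ means $\lim_{P\to\infty}f(P)P^d=K$. *)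

(* Defs.v *)
From Stdlib Require Import Reals Lra Rprod ClassicalEpsilon.
Open Scope R_scope.

(* L is the improper Riemann integral of g over (0, x]  (singularity allowed at 0). *)
Definition improper_int_0 (g : R -> R) (x L : R) : Prop :=
  forall eps, 0 < eps -> exists delta, 0 < delta /\
    forall a, 0 < a -> a < delta ->
      exists pr : Riemann_integrable g a x, Rabs (RiemannInt pr - L) < eps.

Definition improper_int_0_inf (g : R -> R) (L : R) : Prop :=
  forall eps, 0 < eps -> exists delta M, 0 < delta /\
    forall a b, 0 < a -> a < delta -> M < b ->
      exists pr : Riemann_integrable g a b, Rabs (RiemannInt pr - L) < eps.

Definition Gamma_fn (s : R) : R :=
  epsilon (inhabits 0)
    (fun L => improper_int_0_inf (fun t => Rpower t (s - 1) * exp (- t)) L).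

Definition nak_density (m : R) (t : R) : R :=
  if Rle_dec t 0 then 0
  else Rpower m m * Rpower t (m - 1) * exp (- (m * t)) / Gamma_fn m.

Definition nak_cdf (m x : R) : R :=
  if Rle_dec x 0 then 0
  else epsilon (inhabits 0) (fun L => improper_int_0 (nak_density m) x L).

(* CDF at extended bounds: lower bound None = -oo, upper bound None = +oo. *)
Definition cdf_lo (m : R) (o : option R) : R :=
  match o with None => 0 | Some x => nak_cdf m x end.
Definition cdf_hi (m : R) (o : option R) : R :=
  match o with None => 1 | Some x => nak_cdf m x end.

Definition in_range (lo hi : option R) (v : R) : Prop :=
  (match lo with None => True | Some x => x <= v end) /\
  (match hi with None => True | Some y => v < y end).

Definition I_thr (I : R -> R) (beta rho : R) : R :=
  if Rle_dec beta rho then I beta else 0.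

(* Exponential equality  g(P) =. K P^(-d):  lim_{P->oo} g(P) P^d = K. *)
Definition exp_equal (g : R -> R) (K d : R) : Prop :=
  forall eps, 0 < eps -> exists M, 0 < M /\
    forall P, M < P -> Rabs (g P * Rpower P d - K) < eps.

Definition d_beta (B : nat) (Rt Ib : R) : Z :=
  (1 + Int_part (INR B * (1 - Rt / Ib)))%Z.

(* Main.v *)
Require Import Defs.
From Stdlib Require Import Reals Lra Lia Rprod ClassicalEpsilon List ZArith FinFun.
Import ListNotations.
Open Scope R_scope.

Lemma FTC_loc (f Phi : R -> R) a b (pr : Riemann_integrable f a b) :
  a <= b -> (forall x, a <= x <= b -> continuity_pt f x) ->
  (forall x, a <= x <= b -> derivable_pt_lim Phi x (f x)) ->
  RiemannInt pr = Phi b - Phi a.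
Proof.
  intros h C0 D.
  rewrite (RiemannInt_P20 h (FTC_P1 h C0) pr).
  assert (H1 := RiemannInt_P29 h C0).
  assert (H2 : antiderivative f Phi a b).
  { split; [|exact h]. intros x Hx. exists (exist _ (f x) (D x Hx)). reflexivity. }
  destruct (antiderivative_Ucte _ _ _ _ _ H1 H2) as [c Hc].
  rewrite (Hc b), (Hc a); [ring| lra | lra].
Qed.

Lemma dpl_ext f g x l l' : (forall y, f y = g y) -> l = l' ->
  derivable_pt_lim f x l -> derivable_pt_lim g x l'.
Proof.
  intros Hfg <- H eps Heps. destruct (H eps Heps) as [d Hd]. exists d.
  intros h Hh Hh'. rewrite <- !Hfg. now apply Hd.
Qed.

Lemma dpl_cont f x l : derivable_pt_lim f x l -> continuity_pt f x.
Proof. intro H. apply derivable_continuous_pt. exists l. exact H. Qed.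

Lemma dpl_pe c p k x : 0 < x ->
  derivable_pt_lim (fun t => c * Rpower t p * exp (- (k * t))) x
    (c * (p * Rpower x (p - 1)) * exp (- (k * x)) + c * Rpower x p * (exp (- (k * x)) * (- k))).
Proof.
  intro Hx.
  eapply (dpl_ext (mult_fct (fun t => c * Rpower t p) (fun t => exp (- (k*t))))); [intro; reflexivity| reflexivity|].
  apply (derivable_pt_lim_mult (fun t => c * Rpower t p) (fun t => exp (- (k*t))) x (c * (p * Rpower x (p - 1))) (exp (- (k * x)) * (- k))).
  - eapply (dpl_ext (mult_real_fct c (fun t => Rpower t p))).
    + intro; reflexivity.
    + reflexivity.
    + apply derivable_pt_lim_scal. now apply derivable_pt_lim_power.
  - apply (derivable_pt_lim_comp (fun t => - (k*t)) exp).
    + eapply (dpl_ext (opp_fct (mult_real_fct k id))); [intro; reflexivity | reflexivity|].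
      apply derivable_pt_lim_opp. 
      apply (dpl_ext (mult_real_fct k id) _ x (k*1) k); [intro; reflexivity| ring|].
      apply derivable_pt_lim_scal. apply derivable_pt_lim_id.
    + apply derivable_pt_lim_exp.
Qed.

Lemma cont_pe c p k x : 0 < x ->
  continuity_pt (fun t => c * Rpower t p * exp (- (k * t))) x.
Proof. intro Hx. eapply dpl_cont. now apply dpl_pe. Qed.

Lemma Rpower_pos x y : 0 < Rpower x y.
Proof. unfold Rpower. apply exp_pos. Qed.

Lemma int_nonneg f a b (pr : Riemann_integrable f a b) :
  a <= b -> (forall t, a < t < b -> 0 <= f t) -> 0 <= RiemannInt pr.
Proof.
  intros Hab Hf.
  assert (H := RiemannInt_P19 (RiemannInt_P14 a b 0) pr Hab).
  rewrite RiemannInt_P15 in H. unfold fct_cte in H.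
  replace 0 with (0 * (b - a)) by ring. apply H. exact Hf.
Qed.

Lemma improper0_exists f x U : 0 < x ->
  (forall a, 0 < a -> a <= x -> Riemann_integrable f a x) ->
  (forall t, 0 < t <= x -> 0 <= f t) ->
  (forall a (pr : Riemann_integrable f a x), 0 < a <= x -> RiemannInt pr <= U) ->
  exists L, improper_int_0 f x L.
Proof.
  intros Hx Hint Hpos Hb.
  set (S := fun y => exists a, 0 < a <= x /\ exists pr : Riemann_integrable f a x, y = RiemannInt pr).
  assert (HS1 : bound S).
  { exists U. intros y [a [Ha [pr ->]]]. now apply Hb. }
  assert (HS2 : exists y, S y).
  { exists (RiemannInt (Hint x Hx (Rle_refl x))). exists x. split; [lra|]. eexists; reflexivity. }
  destruct (completeness S HS1 HS2) as [L [HL1 HL2]].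
  exists L. intros eps Heps.
  assert (Hex : exists y, S y /\ L - eps < y).
  { apply NNPP. intro Hn. assert (L <= L - eps); [|lra].
    apply HL2. intros y Hy. destruct (Rle_dec y (L - eps)) as [h|h]; [exact h|].
    exfalso; apply Hn; exists y; split; [exact Hy|lra]. }
  destruct Hex as [y [[a0 [Ha0 [pr0 Hy]]] Hy2]].
  exists a0. split; [lra|].
  intros a Ha Ha1. exists (Hint a Ha (Rlt_le _ _ (Rlt_le_trans _ _ _ Ha1 (proj2 Ha0)))).
  set (pr := Hint a Ha _).
  assert (Hle : RiemannInt pr <= L).
  { apply HL1. exists a. split; [lra|]. exists pr; reflexivity. }
  assert (pr1 : Riemann_integrable f a a0).
  { apply (RiemannInt_P22 pr). lra. }
  assert (Hc := RiemannInt_P26 pr1 pr0 pr).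
  assert (Hn := int_nonneg _ _ _ pr1 (Rlt_le _ _ Ha1) ltac:(intros t Ht; apply Hpos; lra)).
  apply Rabs_def1; lra.
Qed.

Lemma exp_le x y : x <= y -> exp x <= exp y.
Proof. intros [h|h]; [left; now apply exp_increasing| rewrite h; lra]. Qed.

Lemma ln_le' x y : 0 < x -> x <= y -> ln x <= ln y.
Proof. intros h [h'|h']; [left; now apply ln_increasing| rewrite h'; lra]. Qed.

Lemma exp_pow y k : exp y ^ k = exp (INR k * y).
Proof.
  induction k as [|k IH]; simpl.
  - rewrite Rmult_0_l, exp_0; reflexivity.
  - rewrite IH, <- exp_plus. f_equal. destruct k; simpl; ring.
Qed.

Lemma improper_inf_exists f U :
  (forall a b, 0 < a -> a <= b -> Riemann_integrable f a b) ->
  (forall t, 0 < t -> 0 <= f t) ->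
  (forall a b (pr : Riemann_integrable f a b), 0 < a <= 1 -> 1 <= b -> RiemannInt pr <= U) ->
  exists L, improper_int_0_inf f L.
Proof.
  intros Hint Hpos Hb.
  set (S := fun y => exists a b, 0 < a <= 1 /\ 1 <= b /\ exists pr : Riemann_integrable f a b, y = RiemannInt pr).
  assert (HS1 : bound S).
  { exists U. intros y [a [b [Ha [Hb' [pr ->]]]]]. now apply Hb. }
  assert (HS2 : exists y, S y).
  { exists (RiemannInt (Hint 1 1 Rlt_0_1 (Rle_refl 1))). exists 1, 1. split; [lra|]. split; [lra|]. eexists; reflexivity. }
  destruct (completeness S HS1 HS2) as [L [HL1 HL2]].
  exists L. intros eps Heps.
  assert (Hex : exists y, S y /\ L - eps < y).
  { apply NNPP. intro Hn. assert (L <= L - eps); [|lra].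
    apply HL2. intros y Hy. destruct (Rle_dec y (L - eps)) as [h|h]; [exact h|].
    exfalso; apply Hn; exists y; split; [exact Hy|lra]. }
  destruct Hex as [y [[a0 [b0 [Ha0 [Hb0 [pr0 Hy]]]]] Hy2]].
  exists a0, b0. split; [lra|].
  intros a b Ha Ha1 Hb1.
  assert (Hab : a <= b) by lra.
  exists (Hint a b Ha Hab).
  set (pr := Hint a b Ha Hab).
  assert (Hle : RiemannInt pr <= L).
  { apply HL1. exists a, b. split; [lra|]. split; [lra|]. exists pr; reflexivity. }
  assert (pr1 : Riemann_integrable f a a0) by (apply Hint; lra).
  assert (pr2 : Riemann_integrable f a0 b) by (apply Hint; lra).
  assert (pr3 : Riemann_integrable f b0 b) by (apply Hint; lra).
  assert (Hc := RiemannInt_P26 pr1 pr2 pr).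
  assert (Hc2 := RiemannInt_P26 pr0 pr3 pr2).
  assert (Hn1 := int_nonneg _ _ _ pr1 (Rlt_le _ _ Ha1) ltac:(intros t Ht; apply Hpos; lra)).
  assert (Hn2 := int_nonneg _ _ _ pr3 (Rlt_le _ _ Hb1) ltac:(intros t Ht; apply Hpos; lra)).
  apply Rabs_def1; lra.
Qed.

Definition gint (m t : R) := Rpower t (m - 1) * exp (- t).

Lemma gint_cont m x : 0 < x -> continuity_pt (gint m) x.
Proof.
  intro Hx. apply (continuity_pt_locally_ext (fun t => 1 * Rpower t (m-1) * exp (- (1 * t))) _ 1);
    [lra| intros; unfold gint; rewrite !Rmult_1_l; reflexivity| now apply cont_pe].
Qed.

Lemma gint_int m a b : 0 < a -> a <= b -> Riemann_integrable (gint m) a b.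
Proof. intros; apply continuity_implies_RiemannInt; [lra| intros; apply gint_cont; lra]. Qed.

Lemma pe_int c p k a b : 0 < a -> a <= b ->
  Riemann_integrable (fun t => c * Rpower t p * exp (- (k * t))) a b.
Proof. intros; apply continuity_implies_RiemannInt; [lra| intros; apply cont_pe; lra]. Qed.

Lemma int_pow c p a b (pr : Riemann_integrable (fun t => c * Rpower t (p - 1) * exp (- (0 * t))) a b) :
  0 < a -> a <= b -> 0 < p ->
  RiemannInt pr = c / p * Rpower b p - c / p * Rpower a p.
Proof.
  intros Ha Hab Hp.
  rewrite (FTC_loc _ (fun t => c / p * Rpower t p * exp (- (0 * t))) a b pr Hab).
  - replace (- (0 * b)) with 0 by ring. replace (- (0 * a)) with 0 by ring. rewrite exp_0. ring.
  - intros; apply cont_pe; lra.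
  - intros x Hx. eapply dpl_ext; [intro; reflexivity| | apply dpl_pe; lra].
    replace (- (0 * x)) with 0 by ring. rewrite exp_0. field. lra.
Qed.

Lemma int_exp K a b (pr : Riemann_integrable (fun t => K * Rpower t 0 * exp (- (/2 * t))) a b) :
  0 < a -> a <= b ->
  RiemannInt pr = 2 * K * exp (- (/2 * a)) - 2 * K * exp (- (/2 * b)).
Proof.
  intros Ha Hab.
  rewrite (FTC_loc _ (fun t => - 2 * K * Rpower t 0 * exp (- (/2 * t))) a b pr Hab).
  - rewrite !Rpower_O by lra. ring.
  - intros; apply cont_pe; lra.
  - intros x Hx. eapply dpl_ext; [intro; reflexivity| | apply dpl_pe; lra].
    rewrite Rpower_O by lra. field.
Qed.

Lemma gint_pos m t : 0 <= gint m t.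
Proof. unfold gint. apply Rmult_le_pos; left; [apply Rpower_pos|apply exp_pos]. Qed.

Lemma gint_tail m : exists K, 0 < K /\ forall t, 1 <= t ->
  gint m t <= K * Rpower t 0 * exp (- (/2 * t)).
Proof.
  destruct (INR_unbounded m) as [n Hn].
  set (k := S n).
  assert (Hk : m - 1 <= INR k) by (unfold k; rewrite S_INR; lra).
  assert (Hk1 : 1 <= INR k) by (unfold k; rewrite S_INR; pose proof (pos_INR n); lra).
  exists ((2 * INR k) ^ k). split; [apply pow_lt; lra|].
  intros t Ht. rewrite Rpower_O by lra. unfold gint.
  assert (H1 : Rpower t (m - 1) <= t ^ k).
  { rewrite <- Rpower_pow by lra. apply Rle_Rpower; lra. }
  assert (H2 : t ^ k <= (2 * INR k) ^ k * exp (/2 * t)).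
  { replace t with (2 * INR k * (t / (2 * INR k))) at 1 by (field; lra).
    rewrite Rpow_mult_distr. apply Rmult_le_compat_l; [apply pow_le; lra|].
    replace (/2 * t) with (INR k * (t / (2 * INR k))) by (field; lra).
    rewrite <- exp_pow. apply pow_incr. split.
    - unfold Rdiv; apply Rmult_le_pos; [lra| left; apply Rinv_0_lt_compat; lra].
    - pose proof (exp_ineq1_le (t / (2 * INR k))). assert (0 <= t/(2*INR k)) by (unfold Rdiv; apply Rmult_le_pos; [lra| left; apply Rinv_0_lt_compat; lra]). lra. }
  assert (H3 : exp (/2 * t) * exp (- t) = exp (- (/2 * t))).
  { rewrite <- exp_plus. apply f_equal. lra. }
  pose proof (exp_pos (- t)).
  apply Rle_trans with (t ^ k * exp (- t)); [apply Rmult_le_compat_r; lra|].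
  rewrite Rmult_1_r, <- H3, <- Rmult_assoc. apply Rmult_le_compat_r; lra.
Qed.


Lemma Rpower_1b x : Rpower 1 x = 1.
Proof. unfold Rpower. rewrite ln_1, Rmult_0_r, exp_0. reflexivity. Qed.

Lemma gint_lower m t : 1 <= t <= 2 ->
  exp (- (Rabs (m - 1) * ln 2)) * exp (- 2) <= gint m t.
Proof.
  intro Ht. unfold gint, Rpower.
  assert (H0 : 0 <= ln t) by (rewrite <- ln_1; apply ln_le'; lra).
  assert (H2 : ln t <= ln 2) by (apply ln_le'; lra).
  assert (Ha : - Rabs (m-1) <= m - 1) by (pose proof (Rle_abs (-(m-1))); rewrite Rabs_Ropp in *; lra).
  pose proof (Rabs_pos (m-1)).
  apply Rmult_le_compat; try (left; apply exp_pos); apply exp_le; [|lra].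
  nra.
Qed.

Lemma Gamma_pos m : 0 < m -> 0 < Gamma_fn m.
Proof.
  intro Hm. unfold Gamma_fn.
  destruct (gint_tail m) as [K [HK HKb]].
  assert (Hex : exists L, improper_int_0_inf (gint m) L).
  { apply (improper_inf_exists _ (1/m + 2*K)).
    - intros; now apply gint_int.
    - intros; apply gint_pos.
    - intros a b pr Ha Hb.
      assert (pr1 := gint_int m a 1 (proj1 Ha) (proj2 Ha)).
      assert (pr2 := gint_int m 1 b Rlt_0_1 Hb).
      rewrite <- (RiemannInt_P26 pr1 pr2 pr).
      assert (I1 : RiemannInt pr1 <= 1/m).
      { assert (q := pe_int 1 (m-1) 0 a 1 (proj1 Ha) (proj2 Ha)).
        apply Rle_trans with (RiemannInt q).
        - apply RiemannInt_P19; [lra|]. intros t Ht. unfold gint.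
          replace (- (0 * t)) with 0 by ring. rewrite exp_0, Rmult_1_l, Rmult_1_r.
          pose proof (Rpower_pos t (m-1)).
          assert (exp (- t) <= 1) by (rewrite <- exp_0; apply exp_le; lra). nra.
        - replace (m - 1) with (m - 1) by reflexivity.
          rewrite (int_pow 1 m a 1 q (proj1 Ha) (proj2 Ha) Hm).
          pose proof (Rpower_pos a m). rewrite Rpower_1b.
          assert (0 <= 1/m*Rpower a m) by (unfold Rdiv; apply Rmult_le_pos; [apply Rmult_le_pos; [lra|left; apply Rinv_0_lt_compat; lra]|lra]).
          lra. }
      assert (I2 : RiemannInt pr2 <= 2 * K).
      { assert (q := pe_int K 0 (/2) 1 b Rlt_0_1 Hb).
        apply Rle_trans with (RiemannInt q).
        - apply RiemannInt_P19; [lra|]. intros t Ht. apply HKb. lra.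
        - rewrite (int_exp K 1 b q Rlt_0_1 Hb).
          assert (exp (- (/2 * 1)) <= 1) by (apply Rle_trans with (exp 0); [apply exp_le; lra | rewrite exp_0; lra]).
          pose proof (exp_pos (- (/2 * b))).
          assert (2 * K * exp (- (/2 * 1)) <= 2 * K * 1) by (apply Rmult_le_compat_l; lra).
          assert (0 <= 2 * K * exp (- (/2 * b))) by (apply Rmult_le_pos; lra).
          lra. }
      lra. }
  assert (Hsp := epsilon_spec (inhabits 0) _ Hex).
  set (L := epsilon _ _) in *.
  set (c0 := exp (- (Rabs (m - 1) * ln 2)) * exp (- 2)).
  assert (Hc0 : 0 < c0) by (apply Rmult_lt_0_compat; apply exp_pos).
  destruct (Hsp (c0/2) ltac:(lra)) as [d [M [Hd HdM]]].
  set (a := Rmin (d/2) 1). set (b := Rmax (M+1) 2).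
  assert (Ha : 0 < a) by (unfold a; apply Rmin_glb_lt; lra).
  assert (Ha1 : a <= 1) by (unfold a; apply Rmin_r).
  assert (Had : a < d) by (unfold a; pose proof (Rmin_l (d/2) 1); lra).
  assert (HbM : M < b) by (unfold b; pose proof (Rmax_l (M+1) 2); lra).
  assert (Hb2 : 2 <= b) by (unfold b; apply Rmax_r).
  destruct (HdM a b Ha Had HbM) as [pr Hpr].
  assert (pr1 := gint_int m a 1 Ha Ha1).
  assert (pr2 := gint_int m 1 b Rlt_0_1 ltac:(lra)).
  assert (pr3 := gint_int m 1 2 Rlt_0_1 ltac:(lra)).
  assert (pr4 := gint_int m 2 b ltac:(lra) Hb2).
  assert (E1 := RiemannInt_P26 pr1 pr2 pr).
  assert (E2 := RiemannInt_P26 pr3 pr4 pr2).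
  assert (N1 := int_nonneg _ _ _ pr1 Ha1 ltac:(intros; apply gint_pos)).
  assert (N2 := int_nonneg _ _ _ pr4 Hb2 ltac:(intros; apply gint_pos)).
  assert (N3 : c0 * (2 - 1) <= RiemannInt pr3).
  { assert (H := RiemannInt_P19 (RiemannInt_P14 1 2 c0) pr3 ltac:(lra)).
    rewrite RiemannInt_P15 in H. unfold fct_cte in H. apply H.
    intros t Ht. apply gint_lower; lra. }
  apply Rabs_def2 in Hpr. lra.
Qed.

Lemma le_eps A B : (forall eps, 0 < eps -> A <= B + eps) -> A <= B.
Proof.
  intro H. destruct (Rle_dec A B) as [h|h]; [exact h|].
  specialize (H ((A - B)/2) ltac:(lra)). lra.
Qed.

Local Notation Cc m := (Rpower m m / Gamma_fn m).

Lemma Cc_pos (m : R) (Hm : 0 < m) : 0 < (Cc m).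
Proof. apply Rmult_lt_0_compat; [apply Rpower_pos| apply Rinv_0_lt_compat, Gamma_pos, Hm]. Qed.

Lemma dens_eq (m : R) (Hm : 0 < m) t : 0 < t -> nak_density m t = (Cc m) * Rpower t (m - 1) * exp (- (m * t)).
Proof.
  intro Ht. unfold nak_density. destruct (Rle_dec t 0); [lra|]. unfold Rdiv. ring.
Qed.

Lemma dens_cont (m : R) (Hm : 0 < m) x : 0 < x -> continuity_pt (nak_density m) x.
Proof.
  intro Hx. apply (continuity_pt_locally_ext (fun t => (Cc m) * Rpower t (m - 1) * exp (- (m * t))) _ x x Hx).
  - intros y Hy. unfold Rdist in Hy. apply Rabs_def2 in Hy. symmetry; apply (dens_eq m Hm); lra.
  - now apply cont_pe.
Qed.

Lemma dens_int (m : R) (Hm : 0 < m) a b : 0 < a -> a <= b -> Riemann_integrable (nak_density m) a b.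
Proof. intros; apply continuity_implies_RiemannInt; [lra| intros; apply (dens_cont m Hm); lra]. Qed.

Lemma J_bounds (m : R) (Hm : 0 < m) a x (pr : Riemann_integrable (nak_density m) a x) : 0 < a -> a <= x ->
  (Cc m) * exp (- (m * x)) / m * Rpower x m - (Cc m) * exp (- (m * x)) / m * Rpower a m <= RiemannInt pr
  <= (Cc m) / m * Rpower x m - (Cc m) / m * Rpower a m.
Proof.
  intros Ha Hax. pose proof (Cc_pos m Hm) as HC.
  split.
  - assert (q := pe_int ((Cc m) * exp (- (m * x))) (m - 1) 0 a x Ha Hax).
    rewrite <- (int_pow _ m a x q Ha Hax Hm).
    apply RiemannInt_P19; [lra|]. intros t Ht. rewrite (dens_eq m Hm) by lra.
    replace (- (0 * t)) with 0 by ring. rewrite exp_0, Rmult_1_r.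
    pose proof (Rpower_pos t (m - 1)).
    assert (exp (- (m * x)) <= exp (- (m * t))) by (apply exp_le; nra).
    assert (0 <= (Cc m) * Rpower t (m-1)) by (apply Rmult_le_pos; lra). nra.
  - assert (q := pe_int (Cc m) (m - 1) 0 a x Ha Hax).
    rewrite <- (int_pow _ m a x q Ha Hax Hm).
    apply RiemannInt_P19; [lra|]. intros t Ht. rewrite (dens_eq m Hm) by lra.
    replace (- (0 * t)) with 0 by ring. rewrite exp_0, Rmult_1_r.
    pose proof (Rpower_pos t (m - 1)).
    assert (exp (- (m * t)) <= 1) by (apply Rle_trans with (exp 0); [apply exp_le; nra| rewrite exp_0; lra]).
    assert (0 <= (Cc m) * Rpower t (m-1)) by (apply Rmult_le_pos; lra). nra.
Qed.

Lemma cdf_bounds (m : R) (Hm : 0 < m) x : 0 < x ->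
  (Cc m) * exp (- (m * x)) / m * Rpower x m <= nak_cdf m x <= (Cc m) / m * Rpower x m.
Proof.
  intro Hx. pose proof (Cc_pos m Hm) as HC. unfold nak_cdf. destruct (Rle_dec x 0); [lra|].
  assert (Hex : exists L, improper_int_0 (nak_density m) x L).
  { apply (improper0_exists _ x ((Cc m) / m * Rpower x m) Hx).
    - intros; now apply (dens_int m Hm).
    - intros t Ht. rewrite (dens_eq m Hm) by lra. pose proof (Rpower_pos t (m-1)). pose proof (exp_pos (- (m * t))).
      apply Rmult_le_pos; [apply Rmult_le_pos|]; lra.
    - intros a pr Ha. destruct (J_bounds m Hm a x pr (proj1 Ha) (proj2 Ha)) as [_ H].
      pose proof (Rpower_pos a m).
      assert (0 <= (Cc m) / m * Rpower a m) by (apply Rmult_le_pos; [unfold Rdiv; apply Rmult_le_pos; [lra| left; apply Rinv_0_lt_compat; lra]|lra]).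
      lra. }
  assert (Hsp := epsilon_spec (inhabits 0) _ Hex).
  set (L := epsilon _ _) in *.
  set (D := (Cc m) * exp (- (m * x)) / m).
  assert (HD : 0 < D) by (unfold D, Rdiv; apply Rmult_lt_0_compat; [apply Rmult_lt_0_compat; [lra|apply exp_pos]| apply Rinv_0_lt_compat; lra]).
  split.
  - apply le_eps. intros eps Heps.
    destruct (Hsp (eps/2) ltac:(lra)) as [d [Hd Hdd]].
    set (eta := eps / 2 / D).
    assert (Heta : 0 < eta) by (unfold eta, Rdiv; apply Rmult_lt_0_compat; [lra| apply Rinv_0_lt_compat; lra]).
    set (a := Rmin (d/2) (Rmin x (Rpower eta (/ m)))).
    assert (Ha : 0 < a) by (unfold a; apply Rmin_glb_lt; [lra| apply Rmin_glb_lt; [lra| apply Rpower_pos]]).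
    assert (Had : a < d) by (unfold a; pose proof (Rmin_l (d/2) (Rmin x (Rpower eta (/ m)))); lra).
    assert (Hax : a <= x) by (unfold a; eapply Rle_trans; [apply Rmin_r| apply Rmin_l]).
    assert (Hae : a <= Rpower eta (/ m)) by (unfold a; eapply Rle_trans; [apply Rmin_r| apply Rmin_r]).
    assert (Ham : Rpower a m <= eta).
    { apply Rle_trans with (Rpower (Rpower eta (/ m)) m).
      - apply Rle_Rpower_l; lra.
      - rewrite Rpower_mult. replace (/ m * m) with 1 by (field; lra). rewrite Rpower_1; lra. }
    destruct (Hdd a Ha Had) as [pr Hpr]. apply Rabs_def2 in Hpr.
    destruct (J_bounds m Hm a x pr Ha Hax) as [H _]. fold D in H.
    assert (D * Rpower a m <= eps / 2).
    { apply Rle_trans with (D * eta); [apply Rmult_le_compat_l; lra|]. unfold eta. right. field. lra. }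
    lra.
  - apply le_eps. intros eps Heps.
    destruct (Hsp eps Heps) as [d [Hd Hdd]].
    set (a := Rmin (d/2) x).
    assert (Ha : 0 < a) by (unfold a; apply Rmin_glb_lt; lra).
    assert (Had : a < d) by (unfold a; pose proof (Rmin_l (d/2) x); lra).
    assert (Hax : a <= x) by (unfold a; apply Rmin_r).
    destruct (Hdd a Ha Had) as [pr Hpr]. apply Rabs_def2 in Hpr.
    destruct (J_bounds m Hm a x pr Ha Hax) as [_ H].
    pose proof (Rpower_pos a m).
    assert (0 <= (Cc m) / m * Rpower a m) by (apply Rmult_le_pos; [unfold Rdiv; apply Rmult_le_pos; [lra| left; apply Rinv_0_lt_compat; lra]|lra]).
    lra.
Qed.

Definition Lim (g : R -> R) (L : R) : Prop :=
  forall eps, 0 < eps -> exists M, forall P, M < P -> Rabs (g P - L) < eps.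

Lemma Lim_ext g h L M0 : (forall P, M0 < P -> g P = h P) -> Lim g L -> Lim h L.
Proof.
  intros He H eps Heps. destruct (H eps Heps) as [M HM]. exists (Rmax M M0).
  intros P HP. rewrite <- He by (pose proof (Rmax_r M M0); lra). apply HM. pose proof (Rmax_l M M0); lra.
Qed.

Lemma Lim_const c : Lim (fun _ => c) c.
Proof. intros eps He. exists 0. intros. unfold Rminus. rewrite Rplus_opp_r, Rabs_R0. lra. Qed.

Lemma Lim_plus g h L K : Lim g L -> Lim h K -> Lim (fun P => g P + h P) (L + K).
Proof.
  intros Hg Hh eps He. destruct (Hg (eps/2) ltac:(lra)) as [M1 H1]. destruct (Hh (eps/2) ltac:(lra)) as [M2 H2].
  exists (Rmax M1 M2). intros P HP.
  specialize (H1 P ltac:(pose proof (Rmax_l M1 M2); lra)). specialize (H2 P ltac:(pose proof (Rmax_r M1 M2); lra)).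
  replace (g P + h P - (L + K)) with ((g P - L) + (h P - K)) by ring.
  pose proof (Rabs_triang (g P - L) (h P - K)). lra.
Qed.

Lemma Lim_mult g h L K : Lim g L -> Lim h K -> Lim (fun P => g P * h P) (L * K).
Proof.
  intros Hg Hh eps He.
  pose proof (Rabs_pos K) as HK. pose proof (Rabs_pos L) as HL.
  destruct (Hh 1 ltac:(lra)) as [M0 H0].
  destruct (Hg (eps / (2 * (Rabs K + 1))) ltac:(apply Rdiv_lt_0_compat; lra)) as [M1 H1].
  destruct (Hh (eps / (2 * (Rabs L + 1))) ltac:(apply Rdiv_lt_0_compat; lra)) as [M2 H2].
  exists (Rmax M0 (Rmax M1 M2)). intros P HP.
  pose proof (Rmax_l M0 (Rmax M1 M2)). pose proof (Rmax_r M0 (Rmax M1 M2)).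
  pose proof (Rmax_l M1 M2). pose proof (Rmax_r M1 M2).
  specialize (H0 P ltac:(lra)). specialize (H1 P ltac:(lra)). specialize (H2 P ltac:(lra)).
  assert (Hhb : Rabs (h P) <= Rabs K + 1).
  { replace (h P) with ((h P - K) + K) by ring. pose proof (Rabs_triang (h P - K) K). lra. }
  replace (g P * h P - L * K) with ((g P - L) * h P + L * (h P - K)) by ring.
  eapply Rle_lt_trans; [apply Rabs_triang|]. rewrite !Rabs_mult.
  assert (E1 : Rabs (g P - L) * Rabs (h P) <= eps / (2 * (Rabs K + 1)) * (Rabs K + 1)).
  { apply Rmult_le_compat; try apply Rabs_pos; lra. }
  assert (E2 : Rabs L * Rabs (h P - K) <= (Rabs L + 1) * (eps / (2 * (Rabs L + 1)))).
  { apply Rmult_le_compat; try apply Rabs_pos; lra. }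
  replace (eps / (2 * (Rabs K + 1)) * (Rabs K + 1)) with (eps/2) in E1 by (field; lra).
  replace ((Rabs L + 1) * (eps / (2 * (Rabs L + 1)))) with (eps/2) in E2 by (field; lra).
  assert (Rabs (g P - L) * Rabs (h P) < eps / 2 \/ Rabs L * Rabs (h P - K) < eps / 2).
  { destruct (Req_dec (Rabs L) 0) as [HL0|HL0].
    - right. rewrite HL0. lra.
    - left. apply Rle_lt_trans with (Rabs (g P - L) * (Rabs K + 1)).
      + apply Rmult_le_compat_l; [apply Rabs_pos|lra].
      + apply Rlt_le_trans with (eps / (2 * (Rabs K + 1)) * (Rabs K + 1)).
        * apply Rmult_lt_compat_r; lra.
        * right; field; lra. }
  lra.
Qed.

Lemma Lim_pow g L n : Lim g L -> Lim (fun P => g P ^ n) (L ^ n).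
Proof.
  intro H. induction n as [|n IH]; simpl.
  - apply Lim_const.
  - apply (Lim_mult g (fun P => g P ^ n)); assumption.
Qed.

Lemma Lim_squeeze lo g hi L M0 : (forall P, M0 < P -> lo P <= g P <= hi P) ->
  Lim lo L -> Lim hi L -> Lim g L.
Proof.
  intros Hb Hl Hh eps He. destruct (Hl eps He) as [M1 H1]. destruct (Hh eps He) as [M2 H2].
  exists (Rmax M0 (Rmax M1 M2)). intros P HP.
  pose proof (Rmax_l M0 (Rmax M1 M2)). pose proof (Rmax_r M0 (Rmax M1 M2)).
  pose proof (Rmax_l M1 M2). pose proof (Rmax_r M1 M2).
  specialize (H1 P ltac:(lra)). specialize (H2 P ltac:(lra)). specialize (Hb P ltac:(lra)).
  apply Rabs_def2 in H1. apply Rabs_def2 in H2. apply Rabs_def1; lra.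
Qed.

Lemma Lim_sum {A} (T : A -> R -> R) (c : A -> R) (l : list A) :
  (forall s, In s l -> Lim (T s) (c s)) ->
  Lim (fun P => fold_right (fun s acc => T s P + acc) 0 l) (fold_right (fun s acc => c s + acc) 0 l).
Proof.
  induction l as [|s l IH]; intro H; simpl.
  - apply Lim_const.
  - apply (Lim_plus (T s)). apply H; now left. apply IH. intros; apply H; now right.
Qed.

Lemma Lim_invpow m : 0 < m -> Lim (fun P => / Rpower P m) 0.
Proof.
  intros Hm eps He. exists (Rpower (/ eps) (/ m)). intros P HP.
  pose proof (Rpower_pos (/eps) (/m)).
  assert (HPm : / eps < Rpower P m).
  { replace (/ eps) with (Rpower (Rpower (/ eps) (/ m)) m).
    - apply Rlt_Rpower_l; lra.
    - rewrite Rpower_mult. replace (/ m * m) with 1 by (field; lra). apply Rpower_1.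
      apply Rinv_0_lt_compat; lra. }
  pose proof (Rpower_pos P m).
  rewrite Rminus_0_r, Rabs_right by (left; apply Rinv_0_lt_compat; lra).
  rewrite <- (Rinv_inv eps). apply Rinv_lt_contravar; [| exact HPm].
  apply Rmult_lt_0_compat; [apply Rinv_0_lt_compat|]; lra.
Qed.

Lemma Lim_expinv c : Lim (fun P => exp (- (c / P))) 1.
Proof.
  intros eps He.
  assert (Hc := dpl_cont exp 0 (exp 0) (derivable_pt_lim_exp 0)).
  destruct (Hc eps He) as [al [Hal Hal2]].
  exists (Rabs c / al + 1). intros P HP.
  assert (HP0 : 0 < P) by (assert (0 <= Rabs c / al) by (apply Rmult_le_pos; [apply Rabs_pos| left; apply Rinv_0_lt_compat; lra]); lra).
  rewrite <- exp_0. destruct (Req_dec (- (c / P)) 0) as [Hz|Hz].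
  { rewrite Hz. unfold Rminus. rewrite Rplus_opp_r, Rabs_R0. exact He. }
  apply (Hal2 (- (c / P))). split; [split; [exact I| auto]|].
  simpl. unfold Rdist. rewrite Rminus_0_r, Rabs_Ropp. unfold Rdiv. rewrite Rabs_mult, Rabs_inv, (Rabs_right P) by lra.
  apply (Rmult_lt_reg_r P); [lra|]. rewrite Rmult_assoc, Rinv_l, Rmult_1_r by lra.
  assert (Rabs c < al * (Rabs c / al + 1)) by (field_simplify; [|lra]; pose proof (Rabs_pos c); lra).
  apply Rlt_trans with (al * (Rabs c / al + 1)); [exact H|]. apply Rmult_lt_compat_l; lra.
Qed.

Lemma Lim_FP m beta : 0 < m -> 0 < beta ->
  Lim (fun P => nak_cdf m (beta / P) * Rpower P m)
      (Rpower m m / Gamma_fn m / m * Rpower beta m).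
Proof.
  intros Hm Hb.
  set (u := Rpower m m / Gamma_fn m / m * Rpower beta m).
  apply (Lim_squeeze (fun P => (Rpower m m / Gamma_fn m * exp (- (m * beta / P)) / m * Rpower beta m))
           _ (fun _ => u) u 0).
  - intros P HP.
    assert (Hx : 0 < beta / P) by (apply Rdiv_lt_0_compat; lra).
    destruct (cdf_bounds m Hm (beta / P) Hx) as [H1 H2].
    assert (Hid : Rpower (beta / P) m * Rpower P m = Rpower beta m).
    { rewrite Rpower_mult_distr by lra. f_equal. field. lra. }
    pose proof (Rpower_pos P m).
    split.
    + apply Rmult_le_compat_r with (r := Rpower P m) in H1; [|lra].
      replace (m * (beta / P)) with (m * beta / P) in H1 by (field; lra).
      rewrite Rmult_assoc, Hid in H1. exact H1.
    + apply Rmult_le_compat_r with (r := Rpower P m) in H2; [|lra].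
      rewrite Rmult_assoc, Hid in H2. exact H2.
  - replace u with (Rpower m m / Gamma_fn m * 1 / m * Rpower beta m) by (unfold u, Rdiv; rewrite Rmult_1_r; reflexivity).
    apply (Lim_mult _ (fun _ => Rpower beta m)); [|apply Lim_const].
    apply (Lim_mult _ (fun _ => / m)); [|apply Lim_const].
    apply (Lim_mult (fun _ => Rpower m m / Gamma_fn m)); [apply Lim_const|].
    apply Lim_expinv.
  - apply Lim_const.
Qed.

Lemma Lim_F m beta : 0 < m -> 0 < beta -> Lim (fun P => nak_cdf m (beta / P)) 0.
Proof.
  intros Hm Hb.
  eapply (Lim_ext (fun P => nak_cdf m (beta / P) * Rpower P m * / Rpower P m) _ _ 0).
  - intros P HP. field. pose proof (Rpower_pos P m); lra.
  - replace 0 with (Rpower m m / Gamma_fn m / m * Rpower beta m * 0) by ring.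
    apply Lim_mult; [now apply Lim_FP| now apply Lim_invpow].
Qed.

Fixpoint all_bools (n : nat) : list (list bool) :=
  match n with
  | O => [[]]
  | S n => map (cons true) (all_bools n) ++ map (cons false) (all_bools n)
  end.

Lemma all_bools_in n s : length s = n -> In s (all_bools n).
Proof.
  revert s; induction n as [|n IH]; intros s Hs.
  - destruct s; [now left| discriminate].
  - destruct s as [|b s]; [discriminate|]. simpl in Hs. injection Hs as Hs. simpl.
    apply in_or_app. destruct b; [left|right]; apply in_map; now apply IH.
Qed.

Lemma all_bools_len n s : In s (all_bools n) -> length s = n.
Proof.
  revert s; induction n as [|n IH]; intros s Hs; simpl in Hs.
  - destruct Hs as [<-|[]]; reflexivity.
  - apply in_app_or in Hs. destruct Hs as [Hs|Hs]; apply in_map_iff in Hs; destruct Hs as [t [<- Ht]];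
    simpl; f_equal; now apply IH.
Qed.

Lemma all_bools_nodup n : NoDup (all_bools n).
Proof.
  induction n as [|n IH]; simpl.
  - constructor; [intros []| constructor].
  - apply NoDup_app.
    + apply Injective_map_NoDup; [intros x y H; now injection H| exact IH].
    + apply Injective_map_NoDup; [intros x y H; now injection H| exact IH].
    + intros x Hx Hy. apply in_map_iff in Hx, Hy. destruct Hx as [a [<- _]]. destruct Hy as [b [Hb _]]. discriminate.
Qed.

Fixpoint ntr (l : list bool) : nat := match l with [] => O | b :: l => ((if b then 1 else 0) + ntr l)%nat end.
Fixpoint nfl (l : list bool) : nat := match l with [] => O | b :: l => ((if b then 0 else 1) + nfl l)%nat end.

Lemma ntr_nfl l : (ntr l + nfl l)%nat = length l.
Proof. induction l as [|b l IH]; simpl; [reflexivity| destruct b; simpl; lia]. Qed.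

Lemma prod_shift f n : prod_f_R0 f (S n) = f O * prod_f_R0 (fun i => f (S i)) n.
Proof.
  induction n as [|n IH].
  - reflexivity.
  - change (prod_f_R0 f (S (S n))) with (prod_f_R0 f (S n) * f (S (S n))).
    rewrite IH. simpl. ring.
Qed.

Lemma prod_list (g : bool -> R) x s :
  prod_f_R0 (fun b => g (nth b (x :: s) false)) (length s) = fold_right (fun (b : bool) (acc : R) => g b * acc) 1 (x :: s).
Proof.
  revert x; induction s as [|y s IH]; intro x.
  - simpl. ring.
  - simpl length. rewrite prod_shift.
    transitivity (g x * prod_f_R0 (fun b => g (nth b (y::s) false)) (length s)); [reflexivity|].
    rewrite (IH y). reflexivity.
Qed.

Lemma sum_list (h : bool -> R) x s :
  sum_f_R0 (fun b => h (nth b (x :: s) false)) (length s) = fold_right (fun (b : bool) (acc : R) => h b + acc) 0 (x :: s).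
Proof.
  revert x; induction s as [|y s IH]; intro x.
  - simpl. ring.
  - simpl length. rewrite decomp_sum by lia.
    transitivity (h x + sum_f_R0 (fun b => h (nth b (y::s) false)) (length s)); [reflexivity|].
    rewrite (IH y). reflexivity.
Qed.

Lemma pp_eq (F : R) (s : list bool) : fold_right (fun (b : bool) (acc : R) => (if b then 1 - F else F) * acc) 1 s = (1 - F) ^ ntr s * F ^ nfl s.
Proof. induction s as [|b s IH]; simpl; [ring| rewrite IH; destruct b; simpl; ring]. Qed.

Lemma ss_eq (c : R) (s : list bool) : fold_right (fun (b : bool) (acc : R) => (if b then c else 0) + acc) 0 s = c * INR (ntr s).
Proof. induction s as [|b s IH]; simpl; [ring| rewrite IH; destruct b; rewrite ?plus_INR; simpl; ring]. Qed.

Lemma prod_ext' f g n : (forall i, f i = g i) -> prod_f_R0 f n = prod_f_R0 g n.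
Proof. intro H. induction n; simpl; rewrite ?IHn; now rewrite ?H. Qed.

Definition Ev {Omega : Type} (B : nat) (gam : nat -> Omega -> R) (s : list bool) (t : R) (w : Omega) : Prop :=
  forall b, (b < B)%nat -> (nth b s false = true -> t <= gam b w) /\ (nth b s false = false -> gam b w < t).

Lemma Pr_False {Omega : Type} (Pr : (Omega -> Prop) -> R) (Hext : forall A C : Omega -> Prop, (forall w, A w <-> C w) -> Pr A = Pr C) (Hadd : forall A C : Omega -> Prop, (forall w, ~ (A w /\ C w)) -> Pr (fun w => A w \/ C w) = Pr A + Pr C) : Pr (fun _ => False) = 0.
Proof.
  assert (H := Hadd (fun _ => False) (fun _ => False) ltac:(intros w [[] _])).
  cbv beta in H. rewrite (Hext (fun w => False \/ False) (fun _ => False)) in H by tauto. lra.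
Qed.

Lemma Pr_Ev (m : R) (B : nat) {Omega : Type} (Pr : (Omega -> Prop) -> R) (gam : nat -> Omega -> R) (HB : (1 <= B)%nat) (Hext : forall A C : Omega -> Prop, (forall w, A w <-> C w) -> Pr A = Pr C) (Hiid : forall lo hi : nat -> option R,
      (forall b x y, (b < B)%nat -> lo b = Some x -> hi b = Some y -> x <= y) ->
      Pr (fun w => forall b, (b < B)%nat -> in_range (lo b) (hi b) (gam b w)) =
      prod_f_R0 (fun b => cdf_hi m (hi b) - cdf_lo m (lo b)) (B - 1)) s t : length s = B ->
  Pr (Ev B gam s t) = (1 - nak_cdf m t) ^ ntr s * nak_cdf m t ^ nfl s.
Proof.
  intro Hs.
  set (lo := fun b => if nth b s false then Some t else None).
  set (hi := fun b => if nth b s false then None else Some t).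
  rewrite (Hext _ (fun w => forall b, (b < B)%nat -> in_range (lo b) (hi b) (gam b w))).
  - rewrite Hiid.
    + destruct s as [|x s']; [simpl in Hs; lia|].
      replace (B - 1)%nat with (length s') by (simpl in Hs; lia).
      rewrite (prod_ext' _ (fun b => (fun c : bool => if c then 1 - nak_cdf m t else nak_cdf m t) (nth b (x :: s') false))).
      * rewrite (prod_list (fun c : bool => if c then 1 - nak_cdf m t else nak_cdf m t) x s'), pp_eq. reflexivity.
      * intro b. unfold lo, hi. destruct (nth b (x :: s') false); simpl; ring.
    + intros b x y _. unfold lo, hi. destruct (nth b s false); congruence.
  - intro w. unfold Ev, in_range, lo, hi. split; intros H b Hb; specialize (H b Hb).
    + destruct (nth b s false); simpl in *; [split; [apply H; reflexivity| exact I] | split; [exact I | apply H; reflexivity]].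
    + destruct (nth b s false); simpl in *; split; intro E; (discriminate || tauto).
Qed.

Lemma Pr_list {Omega : Type} (Pr : (Omega -> Prop) -> R) (Hext : forall A C : Omega -> Prop, (forall w, A w <-> C w) -> Pr A = Pr C) (Hadd : forall A C : Omega -> Prop, (forall w, ~ (A w /\ C w)) -> Pr (fun w => A w \/ C w) = Pr A + Pr C) (Q : list bool -> Omega -> Prop) (l : list (list bool)) : NoDup l ->
  (forall s s', In s l -> In s' l -> s <> s' -> forall w, ~ (Q s w /\ Q s' w)) ->
  Pr (fun w => exists s, In s l /\ Q s w) = fold_right (fun s acc => Pr (Q s) + acc) 0 l.
Proof.
  induction l as [|s l IH]; intros Hnd Hdis; simpl.
  - rewrite <- (Pr_False Pr Hext Hadd). apply Hext. intro w; split; [intros [s [[] _]]| intros []].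
  - inversion Hnd as [|? ? Hn Hnd']; subst.
    rewrite (Hext _ (fun w => Q s w \/ (exists s0, In s0 l /\ Q s0 w))).
    + rewrite Hadd.
      * rewrite IH; [reflexivity| exact Hnd'|]. intros; apply Hdis; simpl; auto.
      * intros w [H1 [s' [Hs' H2]]]. eapply (Hdis s s'); [left; reflexivity| right; exact Hs'| intro; subst; contradiction| split; eassumption].
    + intro w; split.
      * intros [s0 [[<-|Hin] Hq]]; [left; exact Hq| right; exists s0; auto].
      * intros [Hq|[s0 [Hin Hq]]]; [exists s; auto| exists s0; auto].
Qed.

Lemma Ev_unique {Omega : Type} (B : nat) (gam : nat -> Omega -> R) s s' t w : length s = B -> length s' = B -> Ev B gam s t w -> Ev B gam s' t w -> s = s'.
Proof.
  intros Hs Hs' H1 H2. apply (nth_ext s s' false false); [congruence|].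
  intros n Hn. rewrite Hs in Hn. destruct (H1 n Hn) as [a1 b1]. destruct (H2 n Hn) as [a2 b2].
  destruct (nth n s false), (nth n s' false); auto.
  - specialize (a1 eq_refl). specialize (b2 eq_refl). lra.
  - specialize (a2 eq_refl). specialize (b1 eq_refl). lra.
Qed.

Definition pat {Omega : Type} (B : nat) (gam : nat -> Omega -> R) (t : R) (w : Omega) : list bool :=
  map (fun b => if Rle_dec t (gam b w) then true else false) (seq 0 B).

Lemma pat_len {Omega : Type} (B : nat) (gam : nat -> Omega -> R) t w : length (pat B gam t w) = B.
Proof. unfold pat. now rewrite length_map, length_seq. Qed.

Lemma pat_Ev {Omega : Type} (B : nat) (gam : nat -> Omega -> R) t w : Ev B gam (pat B gam t w) t w.
Proof.
  intros b Hb. unfold pat.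
  rewrite nth_indep with (d' := (fun b => if Rle_dec t (gam b w) then true else false) O)
    by (rewrite length_map, length_seq; exact Hb).
  rewrite (map_nth (fun b => if Rle_dec t (gam b w) then true else false) (seq 0 B) O b).
  rewrite seq_nth by exact Hb. simpl.
  destruct (Rle_dec t (gam b w)); split; intro H; try discriminate; lra.
Qed.

Lemma sum_Ev {Omega : Type} (B : nat) (gam : nat -> Omega -> R) (HB : (1 <= B)%nat) (I : R -> R) beta P s w : 0 < P -> length s = B -> Ev B gam s (beta / P) w ->
  sum_f_R0 (fun b => I_thr I beta (P * gam b w)) (B - 1) = I beta * INR (ntr s).
Proof.
  intros HP Hs H.
  destruct s as [|x s']; [simpl in Hs; lia|].
  replace (B - 1)%nat with (length s') by (simpl in Hs; lia).
  rewrite (sum_eq _ (fun b => (fun c : bool => if c then I beta else 0) (nth b (x :: s') false))).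
  - rewrite (sum_list (fun c : bool => if c then I beta else 0) x s'). apply ss_eq.
  - intros i Hi. assert (Hi' : (i < B)%nat) by (simpl in Hs; lia).
    destruct (H i Hi') as [H1 H2]. unfold I_thr.
    destruct (nth i (x :: s') false).
    + specialize (H1 eq_refl). destruct (Rle_dec beta (P * gam i w)) as [|n]; [reflexivity|].
      exfalso; apply n. apply (Rmult_le_compat_l P) in H1; [|lra].
      replace (P * (beta / P)) with beta in H1 by (field; lra). exact H1.
    + specialize (H2 eq_refl). destruct (Rle_dec beta (P * gam i w)) as [h|]; [|reflexivity].
      exfalso. apply (Rmult_lt_compat_l P) in H2; [|lra].
      replace (P * (beta / P)) with beta in H2 by (field; lra). lra.
Qed.

Lemma Pr_event (m : R) (B : nat) {Omega : Type} (Pr : (Omega -> Prop) -> R) (gam : nat -> Omega -> R) (HB : (1 <= B)%nat) (Hext : forall A C : Omega -> Prop, (forall w, A w <-> C w) -> Pr A = Pr C) (Hadd : forall A C : Omega -> Prop, (forall w, ~ (A w /\ C w)) -> Pr (fun w => A w \/ C w) = Pr A + Pr C) (Hiid : forall lo hi : nat -> option R,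
      (forall b x y, (b < B)%nat -> lo b = Some x -> hi b = Some y -> x <= y) ->
      Pr (fun w => forall b, (b < B)%nat -> in_range (lo b) (hi b) (gam b w)) =
      prod_f_R0 (fun b => cdf_hi m (hi b) - cdf_lo m (lo b)) (B - 1)) (I : R -> R) beta Rt P : 0 < P ->
  Pr (fun w => sum_f_R0 (fun b => I_thr I beta (P * gam b w)) (B - 1) / INR B < Rt) =
  fold_right (fun s acc => (if Rlt_dec (I beta * INR (ntr s) / INR B) Rt
       then (1 - nak_cdf m (beta / P)) ^ ntr s * nak_cdf m (beta / P) ^ nfl s else 0) + acc) 0 (all_bools B).
Proof.
  intro HP.
  set (t := beta / P).
  set (Q := fun s w => I beta * INR (ntr s) / INR B < Rt /\ Ev B gam s t w).
  rewrite (Hext _ (fun w => exists s, In s (all_bools B) /\ Q s w)).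
  - rewrite (Pr_list Pr Hext Hadd).
    + assert (Hl : forall s, In s (all_bools B) -> length s = B) by apply all_bools_len.
      revert Hl. induction (all_bools B) as [|s l IH]; intro Hl; simpl; [reflexivity|].
      rewrite IH by (intros; apply Hl; now right). f_equal. unfold Q.
      destruct (Rlt_dec (I beta * INR (ntr s) / INR B) Rt) as [h|h].
      * rewrite <- (Pr_Ev m B Pr gam HB Hext Hiid) by (apply Hl; now left). apply Hext. intro w; tauto.
      * rewrite <- (Pr_False Pr Hext Hadd). apply Hext. intro w; split; [intros [h' _]; contradiction| intros []].
    + apply all_bools_nodup.
    + intros s s' Hs Hs' Hne w [[_ H1] [_ H2]]. apply Hne.
      apply (Ev_unique B gam s s' t w); auto using all_bools_len.
  - intro w. split.
    + intro H. exists (pat B gam t w). split; [apply all_bools_in, pat_len|].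
      split; [|apply pat_Ev]. rewrite <- (sum_Ev B gam HB I beta P (pat B gam t w) w HP (pat_len B gam t w) (pat_Ev B gam t w)). exact H.
    + intros [s [Hs [Hg HE]]]. rewrite (sum_Ev B gam HB I beta P s w HP (all_bools_len _ _ Hs) HE). exact Hg.
Qed.

Lemma dbeta_facts B Rt Ib : (1 <= B)%nat -> 0 < Rt -> Rt <= Ib -> 0 < Ib ->
  exists dn, IZR (d_beta B Rt Ib) = INR dn /\ (1 <= dn <= B)%nat /\
   (forall j, (j <= B)%nat -> (Ib * INR (B - j) / INR B < Rt <-> (dn <= j)%nat)).
Proof.
  intros HB HR HRI HI.
  set (x := INR B * (1 - Rt / Ib)).
  set (z := Int_part x).
  assert (HBp : 0 < INR B) by (apply lt_0_INR; lia).
  assert (Hx0 : 0 <= x).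
  { unfold x. apply Rmult_le_pos; [lra|]. assert (Rt / Ib <= 1); [|lra].
    apply (Rmult_le_reg_r Ib); [lra|]. unfold Rdiv. rewrite Rmult_assoc, Rinv_l by lra. lra. }
  assert (HxB : x < INR B).
  { unfold x. assert (0 < Rt / Ib) by (apply Rdiv_lt_0_compat; lra). nra. }
  destruct (base_Int_part x) as [Hz1 Hz2]. fold z in Hz1, Hz2.
  assert (Hz0 : (0 <= z)%Z).
  { assert (IZR (-1) < IZR z) by lra. apply lt_IZR in H. lia. }
  assert (HzB : (z < Z.of_nat B)%Z).
  { apply lt_IZR. rewrite <- INR_IZR_INZ. lra. }
  exists (Z.to_nat (1 + z)). split; [|split].
  - unfold d_beta. fold x. fold z. rewrite INR_IZR_INZ, Z2Nat.id by lia. reflexivity.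
  - lia.
  - intros j Hj.
    assert (Hid : Ib * INR (B - j) / INR B - Rt = Ib / INR B * (x - INR j)).
    { rewrite minus_INR by exact Hj. unfold x. field. split; lra. }
    assert (Hpos : 0 < Ib / INR B) by (apply Rdiv_lt_0_compat; lra).
    assert (Hiff : Ib * INR (B - j) / INR B < Rt <-> x < INR j).
    { split; intro H.
      - assert (Ib / INR B * (x - INR j) < 0) by lra.
        destruct (Rlt_dec x (INR j)); [assumption|].
        assert (0 <= Ib / INR B * (x - INR j)) by (apply Rmult_le_pos; lra). lra.
      - assert (Ib / INR B * (x - INR j) < 0); [|lra].
        replace 0 with (Ib / INR B * 0) by ring. apply Rmult_lt_compat_l; lra. }
    rewrite Hiff. rewrite INR_IZR_INZ. split; intro H.
    + assert (z < Z.of_nat j)%Z by (apply lt_IZR; lra). lia.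
    + assert (1 + z <= Z.of_nat j)%Z by lia. apply IZR_le in H0. rewrite plus_IZR in H0. lra.
Qed.

Lemma Lim_eq g L L' : Lim g L -> L = L' -> Lim g L'.
Proof. now intros H <-. Qed.

Lemma fold_mult {A} (f : A -> R) c l :
  fold_right (fun s acc => f s + acc) 0 l * c = fold_right (fun s acc => f s * c + acc) 0 l.
Proof. induction l as [|s l IH]; simpl; [ring| rewrite <- IH; ring]. Qed.

Lemma fold_pos {A} (f : A -> R) l : (forall s, In s l -> 0 <= f s) -> (exists s, In s l /\ 0 < f s) ->
  0 < fold_right (fun s acc => f s + acc) 0 l.
Proof.
  induction l as [|s l IH]; intros H1 [s0 [Hin Hp]]; simpl; [destruct Hin|].
  assert (0 <= fold_right (fun s acc => f s + acc) 0 l).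
  { clear IH Hin Hp. induction l as [|s' l IH']; simpl; [lra|].
    assert (0 <= f s') by (apply H1; right; left; reflexivity).
    assert (0 <= fold_right (fun s acc => f s + acc) 0 l) by (apply IH'; intros; apply H1; destruct H0; [left|right; right]; assumption). lra. }
  destruct Hin as [<-|Hin].
  - lra.
  - assert (0 <= f s) by (apply H1; now left).
    assert (0 < fold_right (fun s acc => f s + acc) 0 l) by (apply IH; [intros; apply H1; now right| exists s0; auto]). lra.
Qed.

Lemma nfl_app a b : nfl (a ++ b) = (nfl a + nfl b)%nat.
Proof. induction a as [|x a IH]; simpl; [reflexivity| rewrite IH; lia]. Qed.
Lemma ntr_app a b : ntr (a ++ b) = (ntr a + ntr b)%nat.
Proof. induction a as [|x a IH]; simpl; [reflexivity| rewrite IH; lia]. Qed.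
Lemma nfl_rep n b : nfl (repeat b n) = if b then O else n.
Proof. induction n; simpl; [destruct b; reflexivity| rewrite IHn; destruct b; lia]. Qed.
Lemma ntr_rep n b : ntr (repeat b n) = if b then n else O.
Proof. induction n; simpl; [destruct b; reflexivity| rewrite IHn; destruct b; lia]. Qed.

Theorem mainTheorem6
  (m : R) (B : nat) (beta Rt : R) (I : R -> R)
  (Omega : Type) (Pr : (Omega -> Prop) -> R) (gam : nat -> Omega -> R) :
  0 < m -> (1 <= B)%nat -> 0 < beta -> 0 < I beta ->
  0 < Rt -> Rt <= I beta ->
  (* Pr is a (finitely additive) probability on events of Omega *)
  Pr (fun _ => True) = 1 ->
  (forall A C : Omega -> Prop, (forall w, A w <-> C w) -> Pr A = Pr C) ->
  (forall A C : Omega -> Prop, (forall w, ~ (A w /\ C w)) ->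
      Pr (fun w => A w \/ C w) = Pr A + Pr C) ->
  (* gam 0, ..., gam (B-1) are i.i.d. with the Nakagami-m density nak_density m *)
  (forall lo hi : nat -> option R,
      (forall b x y, (b < B)%nat -> lo b = Some x -> hi b = Some y -> x <= y) ->
      Pr (fun w => forall b, (b < B)%nat -> in_range (lo b) (hi b) (gam b w)) =
      prod_f_R0 (fun b => cdf_hi m (hi b) - cdf_lo m (lo b)) (B - 1)) ->
  exists K, 0 < K /\
    exp_equal
      (fun P => Pr (fun w =>
         sum_f_R0 (fun b => I_thr I beta (P * gam b w)) (B - 1) / INR B < Rt))
      K (m * IZR (d_beta B Rt (I beta))).
Proof.
  intros Hm HB Hb HI HR HRI Htrue Hext Hadd Hiid.
  destruct (dbeta_facts B Rt (I beta) HB HR HRI HI) as [dn [Hd [Hdn Hgood]]].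
  set (u := Rpower m m / Gamma_fn m / m * Rpower beta m).
  assert (Hu : 0 < u).
  { unfold u. pose proof (Gamma_pos m Hm). pose proof (Rpower_pos m m). pose proof (Rpower_pos beta m).
    apply Rmult_lt_0_compat; [|lra]. repeat apply Rdiv_lt_0_compat; lra. }
  set (F := fun P => nak_cdf m (beta / P)).
  set (c := fun s => if Rlt_dec (I beta * INR (ntr s) / INR B) Rt then 0 ^ (nfl s - dn) * u ^ dn else 0).
  exists (fold_right (fun s acc => c s + acc) 0 (all_bools B)). split.
  - apply fold_pos.
    + intros s _. unfold c. destruct Rlt_dec; [|lra].
      apply Rmult_le_pos; apply pow_le; lra.
    + exists (repeat false dn ++ repeat true (B - dn)). split.
      * apply all_bools_in. rewrite length_app, !repeat_length. lia.
      * unfold c. rewrite ntr_app, nfl_app, !ntr_rep, !nfl_rep. simpl.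
        replace (0 + (B - dn))%nat with (B - dn)%nat by lia.
        destruct Rlt_dec as [h|h].
        -- replace (dn + 0 - dn)%nat with O by lia. simpl. rewrite Rmult_1_l. apply pow_lt; lra.
        -- exfalso. apply h. apply Hgood; lia.
  - assert (HL : Lim (fun P => Pr (fun w =>
         sum_f_R0 (fun b => I_thr I beta (P * gam b w)) (B - 1) / INR B < Rt) * Rpower P (m * IZR (d_beta B Rt (I beta))))
         (fold_right (fun s acc => c s + acc) 0 (all_bools B))).
    { set (T := fun s P => (if Rlt_dec (I beta * INR (ntr s) / INR B) Rt
             then (1 - F P) ^ ntr s * F P ^ nfl s else 0) * Rpower P m ^ dn).
      apply (Lim_ext (fun P => fold_right (fun s acc => T s P + acc) 0 (all_bools B)) _ _ 0).
      - intros P HP. rewrite (Pr_event m B Pr gam HB Hext Hadd Hiid I beta Rt P HP).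
        rewrite Hd, <- Rpower_mult, Rpower_pow by apply Rpower_pos.
        rewrite fold_mult. reflexivity.
      - apply Lim_sum. intros s Hs. unfold T, c.
        assert (Hls := all_bools_len _ _ Hs). assert (Hnn := ntr_nfl s).
        destruct Rlt_dec as [h|h].
        + assert (Hle : (dn <= nfl s)%nat).
          { apply Hgood; [lia|]. replace (B - nfl s)%nat with (ntr s) by lia. exact h. }
          apply (Lim_ext (fun P => (1 - F P) ^ ntr s * F P ^ (nfl s - dn) * (F P * Rpower P m) ^ dn) _ _ 0).
          * intros P HP. rewrite Rpow_mult_distr.
            replace (nfl s) with ((nfl s - dn) + dn)%nat at 2 by lia. rewrite pow_add. ring.
          * apply (Lim_eq _ (1 ^ ntr s * 0 ^ (nfl s - dn) * u ^ dn)); [|rewrite pow1; ring].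
            apply Lim_mult; [apply Lim_mult|]; apply Lim_pow.
            -- apply (Lim_eq _ (1 + -1 * 0)); [|ring].
               apply (Lim_ext (fun P => 1 + -1 * F P) _ _ 0); [intros; ring|].
               apply Lim_plus; [apply Lim_const| apply Lim_mult; [apply Lim_const| now apply Lim_F]].
            -- now apply Lim_F.
            -- now apply Lim_FP.
        + apply (Lim_ext (fun _ => 0) _ _ 0); [intros; ring| apply Lim_const]. }
    intros eps Heps. destruct (HL eps Heps) as [M HM]. exists (Rmax M 1).
    split; [pose proof (Rmax_r M 1); lra|].
    intros P HP. apply HM. pose proof (Rmax_l M 1); lra.
Qed.
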